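(* For every $U\in\mathcal U_n$, the part listing $\tilde p(U)$ is the minimal part listing for $U$ with respect to graded reverse lexicographic order.
   Context: A unit interval order on $\{1,\dots,n\}$ is given by closed intervals $I_1,\dots,I_n$ of length $1$, numbered from left to right, with $i\prec j$ iff $I_i$ lies strictly to the left of $I_j$; $\mathcal U_n$ is the set of these. For a sequence $w=(w_1,\dots,w_n)$ of nonnegative integers, $P(w)$ is the poset on $\{1,\dots,n\}$ with $i\prec j$ iff $w_j-w_i\ge2$, or $w_j-w_i=1$ and $i<j$; $w$ is a part listing for $U$ if $P(w)$ is isomorphic to $U$. Area sequences of Dyck paths of length $n$ are the sequences of nonnegative integers with $a_1=0$ and $a_i\le a_{i-1}+1$. For each $U$ there is a unique part listing for $U$ that is the area sequence of a Dyck path; it is denoted $\tilde p(U)$. Graded reverse lexicographic order: $(a_1,\dots,a_n)<(b_1,\dots,b_n)$ if $\sum a_i<\sum b_i$, or if the sums are equal and $a_j>b_j$ where $j$ is the first index where they differ. *)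

(* Defs.v *)
From Stdlib Require Import Reals.
From mathcomp Require Import all_boot all_fingroup.
Set Implicit Arguments. Unset Strict Implicit. Unset Printing Implicit Defensive.

(* Elements {1,...,n} are represented by 'I_n (i.e. 0,...,n-1);
   sequences (w_1,...,w_n) by w : seq nat of size n, w_i = nth 0 w (i-1). *)

(* U is a unit interval order on 'I_n: there are unit intervals
   [x_i, x_i + 1] numbered from left to right (x nondecreasing), and
   i < j in U iff I_i lies strictly to the left of I_j, i.e. x_i + 1 < x_j. *)
Definition is_unit_interval_order (n : nat) (U : rel 'I_n) : Prop :=
  exists x : 'I_n -> R,
    (forall i j : 'I_n, (i <= j)%N -> Rle (x i) (x j)) /\
    (forall i j : 'I_n, U i j <-> Rlt (Rplus (x i) 1) (x j)).

Definition Pw (n : nat) (w : seq nat) : rel 'I_n :=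
  fun i j => let wi := nth 0 w i in let wj := nth 0 w j in
    (wi + 2 <= wj) || ((wj == wi + 1) && (i < j)).

Definition rel_iso (n : nat) (U V : rel 'I_n) : Prop :=
  exists f : {perm 'I_n}, forall i j, U i j = V (f i) (f j).

Definition part_listing (n : nat) (U : rel 'I_n) (w : seq nat) : Prop :=
  size w = n /\ rel_iso U (@Pw n w).

Definition area_seq (n : nat) (a : seq nat) : Prop :=
  size a = n /\ (0 < n -> nth 0 a 0 = 0) /\
  (forall i, 0 < i < n -> nth 0 a i <= (nth 0 a i.-1).+1).

Fixpoint revlex_lt (a b : seq nat) : bool :=
  match a, b with
  | x :: a', y :: b' => (y < x) || ((x == y) && revlex_lt a' b')
  | _, _ => false
  end.

Definition grevlex_lt (a b : seq nat) : bool :=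
  (sumn a < sumn b) || ((sumn a == sumn b) && revlex_lt a b).
Definition grevlex_le (a b : seq nat) : bool := (a == b) || grevlex_lt a b.

(* Main.v *)
Require Import Defs.
From Stdlib Require Import Reals Lra.
From mathcomp Require Import all_boot all_fingroup.
From mathcomp Require Import zify.

Section Area.
Variables (n : nat) (w : seq nat).
Hypothesis Hw : area_seq n w.

Lemma climb t j k : t < n -> j <= t -> nth 0 w j <= k <= nth 0 w t ->
  exists s, j <= s <= t /\ nth 0 w s = k.
Proof.
case: Hw => _ [_ Hstep].
elim: t => [|t IH] Ht Hj /andP[H1 H2].
  have j0 : j = 0 by lia.
  subst j; exists 0; split => //; lia.
case: (ltnP j t.+1) => Hjt; last first.
  have E : j = t.+1 by lia.
  subst j.
  exists t.+1; split; [lia|]; lia.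
case: (leqP k (nth 0 w t)) => Hk.
  have HH : nth 0 w j <= k <= nth 0 w t.
    by apply/andP; split; lia.
  have [s [Hs1 Hs2]] := IH (ltnW Ht) (ltnSE Hjt) HH.
  exists s; split => //; lia.
have := Hstep t.+1 ltac:(lia); rewrite /= => Hst.
exists t.+1; split; [lia|]; lia.
Qed.

Lemma area_below i k : i < n -> k < nth 0 w i -> exists j, j < i /\ nth 0 w j = k.
Proof.
move=> Hi Hk.
have H0 : nth 0 w 0 = 0 by case: Hw => _ [H _]; apply: H; lia.
have [s [Hs1 Hs2]] := @climb i 0 k Hi ltac:(lia) ltac:(apply/andP; split; lia).
exists s; split => //.
have : s != i by apply/eqP => E; subst s; lia.
lia.
Qed.
End Area.

Set Implicit Arguments. Unset Strict Implicit. Unset Printing Implicit Defensive.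

Lemma revlexP a b j : j < size a -> j < size b ->
  (forall i, i < j -> nth 0 a i = nth 0 b i) -> nth 0 b j < nth 0 a j -> revlex_lt a b.
Proof.
elim: a b j => [|x a IH] [|y b] j //= Ha Hb Heq Hlt.
case: j Ha Hb Heq Hlt => [|j] Ha Hb Heq Hlt /=.
  by rewrite Hlt.
have -> : x = y by have := Heq 0 isT.
rewrite eqxx /=.
apply/orP; right.
apply: (IH b j) => // i Hi; exact: (Heq i.+1).
Qed.

Lemma sumn_ord (s : seq nat) n : size s = n -> sumn s = \sum_(i < n) nth 0 s i.
Proof. by move=> <-; rewrite sumnE (big_nth 0) big_mkord. Qed.

Lemma Pw_lt n w (a b : 'I_n) : Pw w a b -> nth 0 w a < nth 0 w b.
Proof. rewrite /Pw => /orP[H|/andP[/eqP H _]]; lia. Qed.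

Definition cnt n (u : seq nat) (c t : nat) :=
  #|[set s : 'I_n | (s < t) && (nth 0 u s == c)]|.

Lemma cnt_mono n u c t1 t2 : t1 <= t2 -> cnt n u c t1 <= cnt n u c t2.
Proof.
move=> H; apply: subset_leq_card; apply/subsetP => s; rewrite !inE.
case/andP=> H1 ->; rewrite andbT; lia.
Qed.

Lemma cnt_eq n u1 u2 c t : (forall i, i < t -> nth 0 u1 i = nth 0 u2 i) ->
  cnt n u1 c t = cnt n u2 c t.
Proof.
move=> H; apply: eq_card => s; rewrite !inE.
by case: (ltnP s t) => //= Hs; rewrite H.
Qed.

Lemma cnt_step n u c t1 t2 (s : 'I_n) : t1 <= s < t2 -> nth 0 u s = c ->
  (cnt n u c t1).+1 <= cnt n u c t2.
Proof.
move=> /andP[H1 H2] Hs.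
have Hn : s \notin [set s : 'I_n | (s < t1) && (nth 0 u s == c)].
  rewrite inE negb_and -leqNgt H1 //.
rewrite /cnt; set A := [set _ | _] in Hn *.
have -> : #|A|.+1 = #|s |: A| by rewrite cardsU1 Hn.
apply: subset_leq_card; apply/subsetP => x.
rewrite !inE => /orP[/eqP ->|/andP[Hx ->]]; last by rewrite andbT; lia.
by rewrite Hs eqxx andbT.
Qed.

Section Min.
Variables (n : nat) (w v : seq nat) (h : {perm 'I_n}).
Hypothesis Hw : area_seq n w.
Hypothesis Hv : size v = n.
Hypothesis Hh : forall a b : 'I_n, Pw w a b = Pw v (h a) (h b).

Lemma min_pointwise (a : 'I_n) : nth 0 w a <= nth 0 v (h a).
Proof.
suff H : forall k (a : 'I_n), nth 0 w a = k -> k <= nth 0 v (h a) by apply: H.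
move=> {a}; elim=> [//|k IH] a Ha.
have [j [Hj1 Hj2]] := @area_below n w Hw a k (ltn_ord a) ltac:(lia).
have Hjn : j < n by have := ltn_ord a; lia.
pose jo := Ordinal Hjn.
have HP : Pw w jo a.
  by rewrite /Pw /= Hj2 Ha addn1 eqxx Hj1 orbT.
rewrite Hh in HP.
have := Pw_lt HP. have := IH jo Hj2. lia.
Qed.


Lemma revlex_part (Hval : forall a : 'I_n, nth 0 w a = nth 0 v (h a)) :
  w != v -> revlex_lt w v.
Proof.
move=> Hne.
have Hsw : size w = n by case: Hw.
have Hex : exists i, (i < n) && (nth 0 w i != nth 0 v i).
  case E: (has (fun i => nth 0 w i != nth 0 v i) (iota 0 n)).
    move/hasP: E => [i Hi Hd]; exists i; rewrite mem_iota in Hi; rewrite Hd andbT; lia.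
  exfalso; move/eqP: Hne; apply.
  apply: (eq_from_nth (x0 := 0)); first by rewrite Hsw Hv.
  move=> i Hi; move/negbT/hasPn: E => /(_ i); rewrite mem_iota add0n -Hsw Hi => /(_ isT).
  by move/negPn/eqP.
case: (ex_minnP Hex) => j /andP[Hj Hd] Hmin.
have Hpre : forall i, i < j -> nth 0 w i = nth 0 v i.
  move=> i Hi; apply/eqP; apply/negPn/negP => Hne'.
  have := Hmin i; rewrite Hne' andbT => /(_ ltac:(lia)); lia.
case: (ltngtP (nth 0 v j) (nth 0 w j)) => Hc; last by rewrite Hc eqxx in Hd.
  by apply: (revlexP (j := j)) => //; lia.
exfalso.
set b := nth 0 v j in Hc.
have Hb : 0 < b by lia.
pose jo := Ordinal Hj.
have K : forall t : 'I_n, nth 0 w t = b -> cnt n w b.-1 t = cnt n v b.-1 (h t).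
  move=> t Ht.
  have E1 : [set s : 'I_n | (s < t) && (nth 0 w s == b.-1)] =
            h @^-1: [set s' : 'I_n | (s' < h t) && (nth 0 v s' == b.-1)].
    apply/setP => s; rewrite !inE -!Hval.
    case E: (nth 0 w s == b.-1); last by rewrite !andbF.
    rewrite !andbT.
    have := Hh s t; rewrite /Pw /= -!Hval (eqP E) Ht.
    have -> : (b.-1 + 2 <= b) = false by lia.
    have -> : (b == b.-1 + 1) = true by lia.
    by [].
  by rewrite /cnt E1 card_preimset //; exact: perm_inj.
pose p := cnt n v b.-1 j.
pose S u := [set t : 'I_n | (nth 0 u t == b) && (cnt n u b.-1 t <= p)].
have H1 : #|S v| <= #|S w|.
  rewrite -(card_preimset _ (@perm_inj _ h)); apply: subset_leq_card.
  apply/subsetP => t; rewrite !inE -Hval => /andP[/eqP Ht Hcn].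
  by rewrite Ht eqxx /= K.
pose r := #|[set t : 'I_n | (t < j) && (nth 0 w t == b)]|.
have H2 : #|S w| <= r.
  apply: subset_leq_card; apply/subsetP => t; rewrite !inE => /andP[/eqP Ht Hcn].
  rewrite Ht eqxx andbT.
  case: (ltnP t j) => // Htj; exfalso.
  have Htj' : j < t.
    rewrite ltn_neqAle Htj andbT; apply/eqP => E; subst j.
    by move: Hc; rewrite -Ht; lia.
  have [s [Hs1 Hs2]] := @climb n w Hw t j b.-1 (ltn_ord t) Htj ltac:(apply/andP; split; lia).
  have Hst : s < t.
    have : s != t by apply/eqP => E; subst s; lia.
    lia.
  have Hsn : s < n by have := ltn_ord t; lia.
  have := @cnt_step n w b.-1 j t (Ordinal Hsn) ltac:(simpl; lia) Hs2.
  rewrite (@cnt_eq n w v b.-1 j Hpre) -/p; lia.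
have H3 : r.+1 <= #|S v|.
  have -> : r = #|[set t : 'I_n | (t < j) && (nth 0 v t == b)]|.
    apply: eq_card => t; rewrite !inE; by case: (ltnP t j) => //= Ht; rewrite Hpre.
  have Hn : jo \notin [set t : 'I_n | (t < j) && (nth 0 v t == b)].
    by rewrite inE ltnn.
  set A := [set _ | _] in Hn *.
  have -> : #|A|.+1 = #|jo |: A| by rewrite cardsU1 Hn.
  apply: subset_leq_card; apply/subsetP => t.
  rewrite !inE => /orP[/eqP ->|/andP[Ht /eqP Hvt]].
    by rewrite eqxx /=.
  rewrite Hvt eqxx /=; apply: cnt_mono; lia.
lia.
Qed.

Lemma min_main : grevlex_le w v.
Proof.
have Hsw : size w = n by case: Hw.
have Ew : sumn w = \sum_(a < n) nth 0 w a by apply: sumn_ord.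
have Ev : sumn v = \sum_(a < n) nth 0 v (h a).
  by rewrite (sumn_ord Hv) (reindex_inj (@perm_inj _ h)).
have Hle : sumn w <= sumn v by rewrite Ew Ev; apply: leq_sum => a _; apply: min_pointwise.
rewrite /grevlex_le /grevlex_lt.
case: (ltngtP (sumn w) (sumn v)) => Hs; first by rewrite orbT.
  lia.
have Hval : forall a : 'I_n, nth 0 w a = nth 0 v (h a).
  have : \sum_(a < n) (nth 0 v (h a) - nth 0 w a) == 0.
    by rewrite sumnB; [rewrite -Ew -Ev Hs subnn | move=> a _; apply: min_pointwise].
  rewrite sum_nat_eq0 => /forallP Hf a.
  have := Hf a; have := min_pointwise a; rewrite /=; lia.
case E: (w == v) => //=.

apply: revlex_part => //; by rewrite E.
Qed.
End Min.

Lemma bigmax_wit (I : finType) (P : pred I) (F : I -> nat) :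
  0 < \max_(i | P i) F i -> exists i, P i /\ \max_(i | P i) F i = F i.
Proof.
case: (pickP P) => [i0 Pi0|P0]; last by rewrite big_pred0.
move=> _.
have H : 0 < #|P| by apply/card_gt0P; exists i0.
have [i Hi E] := @eq_bigmax_cond I P F H.
by exists i.
Qed.

Lemma nth_ins (s : seq nat) q c k : q <= size s ->
  nth 0 (take q s ++ c :: drop q s) k =
  if k < q then nth 0 s k else if k == q then c else nth 0 s k.-1.
Proof.
move=> Hq; rewrite nth_cat size_takel //.
case: ltnP => Hk; first by rewrite nth_take.
case: eqP => [->|Hne]; first by rewrite subnn.
have -> : k - q = (k.-1 - q).+1 by lia.
rewrite /= nth_drop; congr nth; lia.
Qed.

Lemma bump_ltn q k l : (bump q k < bump q l) = (k < l).
Proof. rewrite /bump; case: (leqP q k); case: (leqP q l) => /= H1 H2; apply/idP/idP; lia. Qed.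

Lemma exist_area n (x : 'I_n -> R) :
  (forall i j : 'I_n, (i <= j)%N -> Rle (x i) (x j)) ->
  exists w (f : {perm 'I_n}), area_seq n w /\
    (forall i j, Rlt (Rplus (x i) 1) (x j) <-> Pw w (f i) (f j)) /\
    (forall i j : 'I_n, i < j -> nth 0 w (f i) = nth 0 w (f j) -> f i < f j).
Proof.
elim: n x => [|n IH] x Hx.
  exists [::], 1%g; split; first by split=> //; split=> //; lia.
  by split=> [[]|[]].
pose x' := fun i : 'I_n => x (lift ord_max i).
have Hx' : forall i j : 'I_n, (i <= j)%N -> Rle (x' i) (x' j).
  by move=> i j Hij; apply: Hx; rewrite !lift_max.
have [w' [f' [Ha [Hr Hm]]]] := IH x' Hx'.
have Hsw : size w' = n by case: Ha.
pose z : 'I_n.+1 := ord_max.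
have Hxz : forall i : 'I_n, Rle (x' i) (x z) by move=> i; apply: Hx; exact: leq_ord.
pose Db i := if Rlt_dec (Rplus (x' i) 1) (x z) then true else false.
have DbP : forall i, Db i <-> Rlt (Rplus (x' i) 1) (x z).
  by move=> i; rewrite /Db; case: Rlt_dec.
pose a i := nth 0 w' (f' i).
pose c := \max_(i | Db i) (a i).+1.
pose Pq i := (Db i && (a i == c.-1)) || (a i == c).
pose q := \max_(i | Pq i) (f' i).+1.
have Hqn : q <= n by apply/bigmax_leqP => i _; exact: ltn_ord.
have F1 : forall i, Db i -> (a i).+1 <= c.
  move=> i Di; rewrite /c. by apply: leq_bigmax_cond.
have F3 : 0 < c -> exists s, Db s /\ (a s).+1 = c.
  by move=> /bigmax_wit [s [Hs E]]; exists s.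
have F5 : forall i, Pq i -> f' i < q.
  move=> i Pi; rewrite /q. by apply: leq_bigmax_cond.
have F6 : 0 < q -> exists t, Pq t /\ q = (f' t).+1.
  by move=> /bigmax_wit [s [Hs E]]; exists s.
have Hinv : forall y : 'I_n, a (f'^-1 y)%g = nth 0 w' y by move=> y; rewrite /a permKV.
have F2 : forall i, a i <= c.
  move=> i; case: (leqP (a i) c) => // Hci; exfalso.
  have Hlt : (a i).-1 < nth 0 w' (f' i) by rewrite -/(a i); lia.
  have [y [Hy1 Hy2]] := @area_below n w' Ha (f' i) (a i).-1 (ltn_ord _) Hlt.
  have Hyn : y < n by have := ltn_ord (f' i); lia.
  pose y0 := (f'^-1 (Ordinal Hyn))%g.
  have HP : Pw w' (f' y0) (f' i).
    rewrite /Pw /y0 permKV /= Hy2 -/(a i).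
    have -> : (a i == (a i).-1 + 1) = true by lia.
    by rewrite Hy1 orbT.
  move/Hr: HP => HP.
  have := Hxz i => Hzi.
  have /F1 : Db y0 by apply/DbP; lra.
  have : a y0 = (a i).-1 by rewrite /a /y0 permKV.
  lia.
have Main : forall i, Rlt (Rplus (x' i) 1) (x z) <->
    ((a i + 2 <= c) || (c == a i + 1) && (f' i < q)).
  move=> i; split.
    move/DbP => Di; have := F1 i Di.
    case: (leqP (a i + 2) c) => //= H1 H2.
    have Ec : c = a i + 1 by lia.
    rewrite Ec eqxx /=; apply: F5; rewrite /Pq Di /=.
    by apply/orP; left; apply/eqP; lia.
  case/orP.
    move=> H1.
    have [s [Ds Es]] := F3 ltac:(lia).
    move/DbP: Ds => Ds.
    case: (leqP (a i + 2) (a s)) => H2.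
      have : Pw w' (f' i) (f' s) by rewrite /Pw /= -/(a i) -/(a s) H2.
      move/Hr => H; lra.
    have Eas : a s = a i + 1 by lia.
    case: (ltngtP (f' i) (f' s)) => H3.
    - have : Pw w' (f' i) (f' s).
        by rewrite /Pw /= -/(a i) -/(a s) Eas eqxx H3 orbT.
      move/Hr => H; lra.
    - have Hlt : a i < nth 0 w' (f' s) by rewrite -/(a s); lia.
      have [y [Hy1 Hy2]] := @area_below n w' Ha (f' s) (a i) (ltn_ord _) Hlt.
      have Hyn : y < n by have := ltn_ord (f' s); lia.
      pose y0 := (f'^-1 (Ordinal Hyn))%g.
      have : Pw w' (f' y0) (f' s).
        by rewrite /Pw /y0 permKV /= Hy2 -/(a s) Eas eqxx Hy1 orbT.
      move/Hr => Hys.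
      case: (Rlt_le_dec (Rplus (x' i) 1) (x z)) => // Hzi; exfalso.
      have : Rlt (Rplus (x' y0) 1) (x' i) by lra.
      move/Hr; rewrite /Pw /y0 permKV /= Hy2 -/(a i).
      have -> : (a i + 2 <= a i) = false by lia.
      have -> : (a i == a i + 1) = false by lia.
      by [].
    - have : f' i = f' s by apply: val_inj.
      move/perm_inj => E; subst s; lia.
  case/andP => /eqP Ec H1.
  have [t [Pt Eq]] := F6 ltac:(lia).
  case: (eqVneq i t) => [Eit|Hit].
    subst t; move: Pt; rewrite /Pq.
    have -> : (a i == c) = false by lia.
    by rewrite orbF => /andP[/DbP].
  have Hft : f' i < f' t.
    have : nat_of_ord (f' i) != nat_of_ord (f' t).
      apply/eqP => E; move/negP: Hit; apply; apply/eqP; apply: (@perm_inj _ f'); exact: val_inj.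
    lia.
  move: Pt; rewrite /Pq => /orP[/andP[/DbP Dt /eqP Eat]|/eqP Eat].
    have Hit' : i <= t.
      case: (leqP i t) => // Hti.
      have := Hm t i Hti; rewrite -/(a t) -/(a i) => /(_ ltac:(lia)); lia.
    have := Hx' i t Hit'; lra.
  have : Pw w' (f' i) (f' t).
    by rewrite /Pw /= -/(a i) -/(a t) Eat Ec eqxx Hft orbT.
  move/Hr => H; have := Hxz t; lra.
have Hall : forall y, y < n -> nth 0 w' y <= c.
  by move=> y Hy; have := F2 (f'^-1 (Ordinal Hy))%g; rewrite Hinv.
pose W := take q w' ++ c :: drop q w'.
have HqS : q <= size w' by rewrite Hsw.
have NW : forall k, nth 0 W k =
    if k < q then nth 0 w' k else if k == q then c else nth 0 w' k.-1.
  by move=> k; apply: nth_ins.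
pose q0 : 'I_n.+1 := Ordinal (Hqn : q < n.+1).
have HB : forall k, (bump q k < q) = (k < q).
  by move=> k; rewrite /bump; case: leqP => /= H; apply/idP/idP; lia.
have NW1 : forall k : 'I_n, nth 0 W (lift q0 k) = nth 0 w' k.
  move=> k; rewrite NW /= /bump.
  case: (leqP q k) => H /=.
    have -> : (1 + k < q) = false by lia.
    have -> : (1 + k == q) = false by lia.
    by congr nth; lia.
  by rewrite add0n H.
have NW2 : nth 0 W q0 = c by rewrite NW /= ltnn eqxx.
pose F := fun i : 'I_n.+1 =>
  match unlift ord_max i with Some i' => lift q0 (f' i') | None => q0 end.
have Finj : injective F.
  move=> i j; rewrite /F.
  case: (unliftP ord_max i) => [i' ->|->]; case: (unliftP ord_max j) => [j' ->|->] //.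
  - by move/lift_inj/perm_inj => ->.
  - by move=> E; have := neq_lift q0 (f' i'); rewrite E eqxx.
  - by move=> E; have := neq_lift q0 (f' j'); rewrite -E eqxx.
have Hq0 : q = 0 -> c = 0.
  move=> Eq0; case: (posnP c) => // Hc.
  have [s [Ds Es]] := F3 Hc.
  have : Pq s by rewrite /Pq Ds /=; apply/orP; left; apply/eqP; lia.
  move/F5; lia.
exists W, (perm Finj); split; [|split].
- split; first by rewrite size_cat size_takel // /= size_drop Hsw; lia.
  case: Ha => _ [H0 Hst].
  split.
    move=> _; rewrite NW; case: (ltnP 0 q) => Hq.
      by apply: H0; lia.
    have E : q = 0 by lia.
    by rewrite E eqxx Hq0.
  move=> i /andP[Hi1 Hi2]; rewrite !NW.
  case: (ltnP i q) => Hiq.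
    have -> : (i.-1 < q) = true by lia.
    apply: Hst; lia.
  case: (eqVneq i q) => [Eiq|Hne].
    subst i.
    have -> : (q.-1 < q) = true by lia.
    have [t [Pt Eq]] := F6 Hi1.
    have -> : q.-1 = f' t by lia.
    move: Pt; rewrite /Pq -/(a t) => /orP[/andP[_ /eqP E]|/eqP E]; lia.
  idtac.
  have -> : (i.-1 < q) = false by lia.
  case: (eqVneq i.-1 q) => [E|Hne'].
    rewrite E; have := Hall q ltac:(lia); lia.
  have := Hst i.-1 ltac:(lia).
  lia.
- move=> i j; rewrite !permE /F.
  case: (unliftP ord_max i) => [i' ->|->]; case: (unliftP ord_max j) => [j' ->|->].
  + have := Hr i' j'; rewrite /Pw /= !NW1 bump_ltn; exact.
  + rewrite /Pw /= NW1 NW2 HB; exact: Main.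
  + rewrite /Pw /= NW1 NW2; split.
      by move=> H; have := Hxz j'; rewrite /x' /z => H'; lra.
    have := F2 j'; rewrite /a => H.
    have -> : (c + 2 <= nth 0 w' (f' j')) = false by lia.
    have -> : (nth 0 w' (f' j') == c + 1) = false by lia.
    by [].
  + rewrite /Pw /= NW2; split; first by move=> H; lra.
    have -> : (c + 2 <= c) = false by lia.
    have -> : (c == c + 1) = false by lia.
    by [].
- move=> i j; rewrite !permE /F.
  case: (unliftP ord_max i) => [i' ->|->]; case: (unliftP ord_max j) => [j' ->|->].
  + rewrite !lift_max !NW1 => H E; rewrite /= bump_ltn; exact: Hm.
  + rewrite NW1 NW2 => _ E; rewrite /= HB; apply: F5.
    by rewrite /Pq /a E eqxx orbT.
  + rewrite lift_max /= => H; have := ltn_ord j'; rewrite /=; lia.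
  + by rewrite ltnn.
Qed.

Theorem mainTheorem11 (n : nat) (U : rel 'I_n) :
  is_unit_interval_order U ->
  (exists w, area_seq n w /\ part_listing U w) /\
  (forall w, area_seq n w -> part_listing U w ->
     forall v, part_listing U v -> grevlex_le w v).
Proof.
move=> [x [Hx HU]].
have [w [f [Ha [Hr Hm]]]] := exist_area Hx.
split.
  exists w; split => //; split; first by case: Ha.
  exists f => i j; apply/idP/idP => [/HU/Hr|/Hr/HU] //.
move=> w1 Hw1 [_ [f1 Hf1]] v [Hv [g Hg]].
apply: (@min_main n w1 v (f1^-1 * g)%g Hw1 Hv).
move=> a b; rewrite !permM.
have := Hf1 (f1^-1 a)%g (f1^-1 b)%g; rewrite !permKV => <-.
exact: Hg.
Qed.
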